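(* Let $A,B$ be Pareto sets of size $n$ each, sorted lexicographically, and let $k$ be the size of their Pareto sum. The Successive Binary Search algorithm computes the Pareto sum of $A$ and $B$ in $\mathcal{O}(nk\log n)$ time using $\mathcal{O}(n+k)$ space.
   Context: For $p,p'\in\mathbb{R}^2$, $p$ dominates $p'$ if $p\neq p'$, $p.x\le p'.x$ and $p.y\le p'.y$. A Pareto set is a set $S\subset\mathbb{R}^2$ in which no point dominates another; $S_i$ denotes its element of rank $i$ in lexicographic order. The Minkowski matrix is $M_{ij}=A_i+B_j$ (computed on demand); each column is a sorted Pareto set. The Pareto sum $C$ is the set of entries of $M$ not dominated by any entry of $M$. A range-minimum oracle, given $[x_{\min},x_{\max})\times[y_{\min},y_{\max})$, returns the lexicographically smallest entry of $M$ in that range (or reports none). The successive algorithm: set $C=\{M_{11},M_{nn}\}$, $x_{\min}=M_{11}.x$, $x_{\max}=M_{nn}.x$, $y_{\min}=M_{nn}.y$, $y_{\max}=M_{11}.y$; repeatedly query the oracle; if it returns a point $m$, add $m$ to $C$ and set $x_{\min}=m.x$, $y_{\max}=m.y$; otherwise stop. In Successive Binary Search the oracle is implemented as follows: in each column, binary searches find the first row $f_x$ with $x$-coordinate $\ge x_{\min}$, the last row $l_x$ with $x$-coordinate $<x_{\max}$, the first row $f_y$ with $y$-coordinate $<y_{\max}$ and the last row $l_y$ with $y$-coordinate $\ge y_{\min}$; if $[f_x,l_x]\cap[f_y,l_y]\neq\emptyset$, the entry in row $\max(f_x,f_y)$ is that column's candidate; the oracle returns the lexicographically smallest candidate over all columns.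 *)

(* Defs.v *)
From HB Require Import structures.
From mathcomp Require Import all_boot all_order all_algebra.
Set Implicit Arguments. Unset Strict Implicit. Unset Printing Implicit Defensive.
Import Order.TTheory GRing.Theory Num.Theory.
Local Open Scope ring_scope.

Section Pareto.
Variable R : realDomainType.

Definition point := (R * R)%type.

Definition dominates (p q : point) : bool :=
  [&& p != q, p.1 <= q.1 & p.2 <= q.2].

Definition pareto_set (S : seq point) : Prop :=
  {in S &, forall p q, ~~ dominates p q}.

Definition lexlt (p q : point) : bool :=
  (p.1 < q.1) || ((p.1 == q.1) && (p.2 < q.2)).

Definition padd (p q : point) : point := (p.1 + q.1, p.2 + q.2).

(* Minkowski matrix entry M_{ij} = A_i + B_j (0-based indices), computed on demand *)
Definition mentry (A B : seq point) (i j : nat) : point :=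
  padd (nth (0, 0) A i) (nth (0, 0) B j).

Definition minkowski_entries (A B : seq point) : seq point :=
  [seq padd a b | a <- A, b <- B].

Definition pareto_sum (A B : seq point) : seq point :=
  undup [seq m <- minkowski_entries A B |
           ~~ has (fun m' => dominates m' m) (minkowski_entries A B)].

(* Binary search on [lo, hi) for the first index satisfying the (monotone)
   predicate p (returns hi if none); second component = number of probes. *)
Fixpoint bsearch (p : nat -> bool) (fuel lo hi : nat) : nat * nat :=
  match fuel with
  | 0 => (lo, 0)
  | f.+1 =>
    if lo < hi then
      let mid := (lo + hi)./2 in
      if p mid then let: (r, c) := bsearch p f lo mid in (r, c.+1)
      else let: (r, c) := bsearch p f mid.+1 hi in (r, c.+1)
    else (lo, 0)
  end%N.

(* Candidate of column j for the range [xmin,xmax) x [ymin,ymax), with cost.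
   f_x = fx, l_x = gx - 1, f_y = fy, l_y = gy - 1; the intersection
   [f_x,l_x] /\ [f_y,l_y] is nonempty iff max fx fy < min gx gy. *)
Definition col_candidate (A B : seq point) (n j : nat) (xmin xmax ymin ymax : R)
  : option point * nat :=
  let e i := mentry A B i j in
  let: (fx, c1) := bsearch (fun i => xmin <= (e i).1) n 0 n in
  let: (gx, c2) := bsearch (fun i => xmax <= (e i).1) n 0 n in
  let: (fy, c3) := bsearch (fun i => (e i).2 < ymax) n 0 n in
  let: (gy, c4) := bsearch (fun i => (e i).2 < ymin) n 0 n in
  let lo := maxn fx fy in
  let hi := minn gx gy in
  (if (lo < hi)%N then Some (e lo) else None, (c1 + c2 + c3 + c4 + 1)%N).

Definition lexmin_opt (o1 o2 : option point) : option point :=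
  match o1, o2 with
  | Some p, Some q => Some (if lexlt q p then q else p)
  | None, o => o
  | o, None => o
  end.

Definition oracle (A B : seq point) (n : nat) (xmin xmax ymin ymax : R)
  : option point * nat :=
  foldl (fun acc j =>
           let: (c, t) := col_candidate A B n j xmin xmax ymin ymax in
           (lexmin_opt acc.1 c, (acc.2 + t + 1)%N))
        (None, 0%N) (iota 0 n).

(* constant number of auxiliary memory words (xmin,xmax,ymin,ymax, counters,
   current candidate, ...) *)
Definition aux_words : nat := 16.

(* memory in use: the input (2n points), the output list C and O(1) words *)
Definition mem_used (n : nat) (C : seq point) : nat := (2 * n + size C + aux_words)%N.

Fixpoint sbs_loop (A B : seq point) (n fuel : nat) (C : seq point)
  (xmin xmax ymin ymax : R) (t s : nat) : seq point * nat * nat :=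
  match fuel with
  | 0 => (C, t, s)
  | f.+1 =>
    let: (r, c) := oracle A B n xmin xmax ymin ymax in
    match r with
    | None => (C, (t + c + 1)%N, s)
    | Some m =>
      let C' := rcons C m in
      sbs_loop A B n f C' m.1 xmax ymin m.2 (t + c + 1)%N (maxn s (mem_used n C'))
    end
  end.

Definition sbs (A B : seq point) : seq point * nat * nat :=
  let n := size A in
  let M11 := mentry A B 0 0 in
  let Mnn := mentry A B n.-1 n.-1 in
  sbs_loop A B n (n * n).+1 [:: M11; Mnn] M11.1 Mnn.1 Mnn.2 M11.2
           1%N (mem_used n [:: M11; Mnn]).

Definition sbs_output A B : seq point := (sbs A B).1.1.
Definition sbs_time A B : nat := (sbs A B).1.2.
Definition sbs_space A B : nat := (sbs A B).2.

End Pareto.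

(* Main.v *)
Require Import Defs.
From HB Require Import structures.
From mathcomp Require Import all_boot all_order all_algebra.
From mathcomp Require Import zify.
Set Implicit Arguments. Unset Strict Implicit. Unset Printing Implicit Defensive.
Import Order.TTheory GRing.Theory Num.Theory.
Local Open Scope ring_scope.

Lemma ar2 a b c d : (a < b -> c <= d.+1 + a -> c <= d + b)%N.
Proof. lia. Qed.
Lemma ar3 T t c K a b : (a < b -> c <= K -> T <= t + c + 1 + a.+1 * K.+1 -> T <= t + b.+1 * K.+1)%N.
Proof. nia. Qed.
Lemma ar4 S s n d a b w : (a < b -> S <= maxn (maxn s (2 * n + d.+1 + w)) (2 * n + d.+1 + a + w) ->
   S <= maxn s (2 * n + d + b + w))%N.
Proof. lia. Qed.

Lemma mid_bounds lo hi : (lo < hi)%N -> (lo <= (lo + hi)./2 < hi)%N /\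
   ((lo+hi)./2.*2 <= lo + hi <= (lo+hi)./2.*2 + 1)%N.
Proof.
move=> h; have := odd_double_half (lo + hi).
case: (odd _) => /=; rewrite -muln2; lia.
Qed.

Lemma bsearch_spec (p : nat -> bool) f lo hi :
  (forall i j, lo <= i -> i <= j -> j < hi -> p i -> p j)%N ->
  (hi - lo <= f)%N -> (lo <= hi)%N ->
  (lo <= (bsearch p f lo hi).1 <= hi)%N /\
  forall i, (lo <= i < hi)%N -> p i = ((bsearch p f lo hi).1 <= i)%N.
Proof.
elim: f lo hi => [|f IH] lo hi mono hf hlh /=.
  have -> : hi = lo by lia.
  split => /=; [lia| move=> i; lia].
case: ltnP => hlt; last first.
  have -> : hi = lo by lia.
  split => /=; [lia| move=> i; lia].
have [hm1 hm2] := mid_bounds hlt.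
set mid := (lo + hi)./2 in hm1 hm2 *.
case: ifP => pm.
  case E: bsearch => [r c] /=.
  have := IH lo mid; rewrite E /=; case.
  - move=> i j h1 h2 h3; apply: mono => //; lia.
  - lia.
  - lia.
  move=> hr hsp; split; first lia.
  move=> i hi'; case: (ltnP i mid) => him.
    apply: hsp; lia.
  rewrite (mono mid i) //; [lia|lia|lia].
case E: bsearch => [r c] /=.
have := IH mid.+1 hi; rewrite E /=; case.
- move=> i j h1 h2 h3; apply: mono => //; lia.
- lia.
- lia.
move=> hr hsp; split; first lia.
move=> i hi'; case: (ltnP mid i) => him.
  apply: hsp; lia.
have -> : (r <= i)%N = false by lia.
apply/negP => pi; move: pm; rewrite (mono i mid) //; lia.
Qed.

Lemma bsearch_cost (p : nat -> bool) f lo hi L :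
  (hi - lo < 2 ^ L)%N -> ((bsearch p f lo hi).2 <= L)%N.
Proof.
elim: f lo hi L => [|f IH] lo hi L hL //=.
case: ltnP => hlt //.
have [hm1 hm2] := mid_bounds hlt.
set mid := (lo + hi)./2 in hm1 hm2 *.
case: L hL => [|L]; first by rewrite expn0; lia.
rewrite expnS => hL.
case: ifP => pm.
  case E: bsearch => [r c] /=.
  have := IH lo mid L; rewrite E /=; apply.
  move: hL hm2; set P := (2 ^ L)%N; rewrite -!muln2; lia.
case E: bsearch => [r c] /=.
have := IH mid.+1 hi L; rewrite E /=; apply.
move: hL hm2; set P := (2 ^ L)%N; rewrite -!muln2; lia.
Qed.

Section S. Variable R : realDomainType.
Implicit Types a b c : point R.
Lemma lexlt_total a b : a != b -> lexlt a b || lexlt b a.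
Proof.
case: a b => a1 a2 [b1 b2]; rewrite /lexlt /=.
case: (ltgtP a1 b1) => //= e1; case: (ltgtP a2 b2) => //= e2.
by rewrite e1 e2 eqxx.
Qed.
Lemma lexlt_trans : transitive (@lexlt R).
Proof.
move=> b a c; rewrite /lexlt.
case: (ltgtP a.1 b.1) => h1 /=; case: (ltgtP b.1 c.1) => h2 //=.
- by rewrite (lt_trans h1 h2).
- by rewrite -h2 h1.
- by rewrite h1 h2.
- rewrite h1 h2 ltxx eqxx /=; exact: lt_trans.
Qed.
Lemma lexnlt_trans a b c : ~~ lexlt b a -> ~~ lexlt c b -> ~~ lexlt c a.
Proof.
move=> h1 h2; apply/negP => h3.
case: (eqVneq b a) => [eba|nba]; first by rewrite eba h3 in h2.
have := lexlt_total nba; rewrite (negbTE h1) /= => hba.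
by rewrite (lexlt_trans h3 hba) in h2.
Qed.
Lemma lexlt_le1 a b : lexlt a b -> a.1 <= b.1.
Proof. by rewrite /lexlt => /orP [/ltW|/andP [/eqP -> _]]. Qed.
Lemma strict_of (S : seq (point R)) : pareto_set S -> sorted (@lexlt R) S ->
  forall i j, (i < j < size S)%N ->
  (nth (0,0) S i).1 < (nth (0,0) S j).1 /\ (nth (0,0) S j).2 < (nth (0,0) S i).2.
Proof.
move=> hp hs i j hij.
have [hij' hjS] : (i < j)%N /\ (j < size S)%N by apply/andP.
have hiS : (i < size S)%N := ltn_trans hij' hjS.
have ha : nth (0,0) S i \in S by apply: mem_nth.
have hb : nth (0,0) S j \in S by apply: mem_nth.
have hlt := sorted_ltn_nth lexlt_trans (0,0) hs.
have hi' : (i \in [pred n | n < size S])%N by rewrite inE.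
have hj : (j \in [pred n | n < size S])%N by rewrite inE.
move: (hlt i j hi' hj hij').
have := hp _ _ ha hb.
move: (nth (0,0) S i) (nth (0,0) S j) => [a1 a2] [b1 b2].
rewrite /dominates /lexlt /= => nd /orP [h1|/andP [/eqP e1 h2]].
  split => //; rewrite ltNge; apply/negP => h2; move/negP: nd; apply.
  rewrite (ltW h1) h2 !andbT; apply/negP => /eqP; case=> e _; by move: h1; rewrite e ltxx.
exfalso; move/negP: nd; apply; rewrite e1 lexx (ltW h2) !andbT.
apply/negP => /eqP; case=> e; by move: h2; rewrite e ltxx.
Qed.

Variables (A B : seq (point R)) (n : nat).
Hypotheses (sA : size A = n) (sB : size B = n) (pA : pareto_set A) (pB : pareto_set B)
  (oA : sorted (@lexlt R) A) (oB : sorted (@lexlt R) B).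

Local Notation e := (mentry A B).

Lemma colx i i' j : (i < i' < n)%N -> (e i j).1 < (e i' j).1.
Proof.
move=> h; have h' : (i < i' < size A)%N by rewrite sA.
have [h1 _] := strict_of pA oA h'; rewrite /mentry /padd /=.
by rewrite ltrD2r.
Qed.
Lemma coly i i' j : (i < i' < n)%N -> (e i' j).2 < (e i j).2.
Proof.
move=> h; have h' : (i < i' < size A)%N by rewrite sA.
have [_ h1] := strict_of pA oA h'; rewrite /mentry /padd /=.
by rewrite ltrD2r.
Qed.
Lemma rowx i j j' : (j < j' < n)%N -> (e i j).1 < (e i j').1.
Proof.
move=> h; have h' : (j < j' < size B)%N by rewrite sB.
have [h1 _] := strict_of pB oB h'; rewrite /mentry /padd /=.
by rewrite ltrD2l.
Qed.
Lemma rowy i j j' : (j < j' < n)%N -> (e i j').2 < (e i j).2.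
Proof.
move=> h; have h' : (j < j' < size B)%N by rewrite sB.
have [_ h1] := strict_of pB oB h'; rewrite /mentry /padd /=.
by rewrite ltrD2l.
Qed.
Lemma colx_le i i' j : (i <= i' < n)%N -> (e i j).1 <= (e i' j).1.
Proof. move=> h; case: (ltnP i i') => h'; [apply: ltW; apply: colx; lia|]. by have -> : i = i' by lia. Qed.
Lemma coly_le i i' j : (i <= i' < n)%N -> (e i' j).2 <= (e i j).2.
Proof. move=> h; case: (ltnP i i') => h'; [apply: ltW; apply: coly; lia|]. by have -> : i = i' by lia. Qed.
Lemma rowx_le i j j' : (j <= j' < n)%N -> (e i j).1 <= (e i j').1.
Proof. move=> h; case: (ltnP j j') => h'; [apply: ltW; apply: rowx; lia|]. by have -> : j = j' by lia. Qed.
Lemma rowy_le i j j' : (j <= j' < n)%N -> (e i j').2 <= (e i j).2.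
Proof. move=> h; case: (ltnP j j') => h'; [apply: ltW; apply: rowy; lia|]. by have -> : j = j' by lia. Qed.

Lemma min_x i j : (i < n)%N -> (j < n)%N -> (e i j).1 <= (e 0 0).1 -> i = 0%N /\ j = 0%N.
Proof.
move=> hi hj h.
case: (posnP i) => [i0|ip].
  subst i; case: (posnP j) => [//|jp].
  by have := @rowx 0 0 j ltac:(lia); rewrite ltNge h.
have h1 := @colx 0 i j ltac:(lia).
have h2 := @rowx_le 0 0 j ltac:(lia).
by have := le_lt_trans h2 h1; rewrite ltNge h.
Qed.

Lemma min_y i j : (i < n)%N -> (j < n)%N -> (e i j).2 <= (e n.-1 n.-1).2 -> i = n.-1 /\ j = n.-1.
Proof.
move=> hi hj h.
case: (ltnP i n.-1) => [ip|i0].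
  have h1 := @coly i n.-1 j ltac:(lia).
  have h2 := @rowy_le n.-1 j n.-1 ltac:(lia).
  have := le_lt_trans h2 h1; by rewrite ltNge h.
have ei : i = n.-1 by lia. subst i.
case: (ltnP j n.-1) => [jp|j0]; last by split => //; lia.
have := @rowy n.-1 j n.-1 ltac:(lia).
by rewrite ltNge h.
Qed.

Lemma y_ge i j : (i < n)%N -> (j < n)%N -> (e n.-1 n.-1).2 <= (e i j).2.
Proof.
move=> hi hj; apply: le_trans (@coly_le i n.-1 j ltac:(lia)).
exact: (@rowy_le n.-1 j n.-1 ltac:(lia)).
Qed.

Lemma entriesP q : reflect (exists i j, [/\ (i < n)%N, (j < n)%N & q = e i j])
   (q \in minkowski_entries A B).
Proof.
apply: (iffP allpairsP) => [[[a b] /= [ha hb ->]]|[i [j [hi hj ->]]]].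
  exists (index a A), (index b B); rewrite /mentry !nth_index //.
  by split => //; [rewrite -sA index_mem | rewrite -sB index_mem].
exists (nth (0,0) A i, nth (0,0) B j); split => //=; apply: mem_nth; by rewrite ?sA ?sB.
Qed.

Lemma lexlt_irr a : ~~ lexlt a a.
Proof. by rewrite /lexlt ltxx eqxx ltxx. Qed.

Variable L : nat.
Hypothesis hL : (n < 2 ^ L)%N.

Lemma bs_all (p : nat -> bool) :
  (forall i j, (i <= j)%N -> (j < n)%N -> p i -> p j) ->
  ((bsearch p n 0 n).1 <= n)%N /\
  (forall i, (i < n)%N -> p i = ((bsearch p n 0 n).1 <= i)%N) /\
  ((bsearch p n 0 n).2 <= L)%N.
Proof.
move=> mono; have [h1 h2] := @bsearch_spec p n 0 n (fun i j _ => mono i j) ltac:(lia) ltac:(lia).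
split; first by case/andP: h1.
split; first by move=> i hi; apply: h2.
apply: bsearch_cost; rewrite subn0; exact: hL.
Qed.

Section Range.
Variables xmin xmax ymin ymax : R.
Definition inrange (q : point R) :=
  [&& xmin <= q.1, q.1 < xmax, ymin <= q.2 & q.2 < ymax].

Definition good (o : option (point R)) (S : point R -> Prop) : Prop :=
  match o with
  | Some m => m \in minkowski_entries A B /\ inrange m /\
              (forall q, S q -> inrange q -> ~~ lexlt q m)
  | None => forall q, S q -> ~~ inrange q
  end.

Lemma good_sub o (S1 S2 : point R -> Prop) :
  (forall q, S2 q -> S1 q) -> good o S1 -> good o S2.
Proof.
case: o => [m|] /= hs; last by move=> h q /hs; apply: h.
by case=> h1 [h2 h3]; split => //; split => // q /hs; apply: h3.
Qed.

Lemma lexmin_good o1 o2 S1 S2 : good o1 S1 -> good o2 S2 ->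
  good (lexmin_opt o1 o2) (fun q => S1 q \/ S2 q).
Proof.
case: o1 => [p|]; case: o2 => [q|] //=.
- move=> [hp1 [hp2 hp3]] [hq1 [hq2 hq3]]; case: ifP => hqp.
    split => //; split => // x [/hp3 h|/hq3 h] /h //.
    apply: contra => hxq; exact: lexlt_trans hxq hqp.
  split => //; split => // x [/hp3 h|/hq3 h] /h // hxq.
  exact: lexnlt_trans (negbT hqp) hxq.
- move=> [hp1 [hp2 hp3]] hn; split => //; split => // x [hx|hx] hr; [exact: hp3 | by move: (hn x hx); rewrite hr].
- move=> hn [hq1 [hq2 hq3]]; split => //; split => // x [hx|hx] hr; [by move: (hn x hx); rewrite hr | exact: hq3].
- move=> h1 h2 x [/h1|/h2] //.
Qed.

Lemma col_good j : (j < n)%N ->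
  good (col_candidate A B n j xmin xmax ymin ymax).1
       (fun q => exists i, (i < n)%N /\ q = e i j) /\
  ((col_candidate A B n j xmin xmax ymin ymax).2 <= 4 * L + 1)%N.
Proof.
move=> hj; rewrite /col_candidate.
case E1: (bsearch _ n 0 n) => [fx c1].
have := @bs_all (fun i => xmin <= (e i j).1); rewrite E1 /= => -[].
  by move=> i i' h1 h2 h; apply: le_trans h (@colx_le i i' j ltac:(lia)).
move=> b1 [s1 k1].
case E2: (bsearch _ n 0 n) => [gx c2].
have := @bs_all (fun i => xmax <= (e i j).1); rewrite E2 /= => -[].
  by move=> i i' h1 h2 h; apply: le_trans h (@colx_le i i' j ltac:(lia)).
move=> b2 [s2 k2].
case E3: (bsearch _ n 0 n) => [fy c3].
have := @bs_all (fun i => (e i j).2 < ymax); rewrite E3 /= => -[].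
  by move=> i i' h1 h2 h; apply: le_lt_trans h; apply: (@coly_le i i' j); lia.
move=> b3 [s3 k3].
case E4: (bsearch _ n 0 n) => [gy c4].
have := @bs_all (fun i => (e i j).2 < ymin); rewrite E4 /= => -[].
  by move=> i i' h1 h2 h; apply: le_lt_trans h; apply: (@coly_le i i' j); lia.
move=> b4 [s4 k4].
have inr i : (i < n)%N -> inrange (e i j) = (maxn fx fy <= i < minn gx gy)%N.
  move=> hi; rewrite /inrange ltNge (leNgt ymin) s1 // s2 // s3 // s4 //.
  apply/idP/idP => h; lia.
split; last by lia.
case: ifP => hlh /=.
  split; first by apply/entriesP; exists (maxn fx fy), j; split => //; lia.
  split; first by rewrite inr //; lia.
  move=> q [i' [hi' ->]]; rewrite inr // => hr; apply/negP => hlt.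
  have := lexlt_le1 hlt.
  case: (ltnP (maxn fx fy) i') => hc.
    by rewrite leNgt (@colx (maxn fx fy) i' j) //; lia.
  have ei : i' = maxn fx fy by lia.
  by subst i'; move=> _; move: hlt; rewrite (negbTE (lexlt_irr _)).
move=> q [i' [hi' ->]]; rewrite inr //; lia.
Qed.

Lemma oracle_fold js acc (S0 : point R -> Prop) :
  all (fun j => j < n)%N js -> good acc.1 S0 ->
  good (foldl (fun acc j =>
           let: (c, t) := col_candidate A B n j xmin xmax ymin ymax in
           (lexmin_opt acc.1 c, (acc.2 + t + 1)%N)) acc js).1
       (fun q => S0 q \/ exists i j, [/\ (i < n)%N, j \in js & q = e i j]) /\
  ((foldl (fun acc j =>
           let: (c, t) := col_candidate A B n j xmin xmax ymin ymax in
           (lexmin_opt acc.1 c, (acc.2 + t + 1)%N)) acc js).2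
     <= acc.2 + size js * (4 * L + 2))%N.
Proof.
elim: js acc S0 => [|j js IH] acc S0 /=.
  by move=> _ h; split; [apply: good_sub h => q [//|[i [j [_ ]]]] | lia].
case/andP=> hj hjs hacc.
have [cg cc] := col_good hj.
case E: col_candidate cg cc => [c t] /= cg cc.
have := IH (lexmin_opt acc.1 c, (acc.2 + t + 1)%N)
   (fun q => S0 q \/ exists i, (i < n)%N /\ q = e i j) hjs (lexmin_good hacc cg).
case=> h1 h2; split; last by move: h2 => /=; lia.
apply: good_sub h1 => q [h|[i [j' [hi]]]].
  by left; left.
rewrite inE => /orP [/eqP ->|hj'] ->; first by left; right; exists i.
by right; exists i, j'.
Qed.

Lemma oracle_good :
  good (oracle A B n xmin xmax ymin ymax).1 (fun q => q \in minkowski_entries A B) /\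
  ((oracle A B n xmin xmax ymin ymax).2 <= n * (4 * L + 2))%N.
Proof.
have := @oracle_fold (iota 0 n) (None, 0%N) (fun _ => False).
case.
- by apply/allP => j; rewrite mem_iota; lia.
- by [].
move=> h1 h2; split; last by rewrite size_iota /= add0n in h2; exact: h2.
apply: good_sub h1 => q /entriesP [i [j [hi hj ->]]]; right; exists i, j.
by split => //; rewrite mem_iota; lia.
Qed.

End Range.
Lemma pt_eq a b : a.1 = b.1 -> a.2 = b.2 -> a = b.
Proof. by case: a b => ? ? [? ?] /= -> ->. Qed.

Lemma dom_intro (p q : point R) : p != q -> p.1 <= q.1 -> p.2 <= q.2 -> dominates p q.
Proof. by move=> *; apply/and3P. Qed.

Lemma count_lt (T : eqType) (a b : pred T) (s : seq T) x0 :
  (forall x, b x -> a x) -> x0 \in s -> a x0 -> ~~ b x0 -> (count b s < count a s)%N.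
Proof.
move=> hab; elim: s => [//|y s IH] /=; rewrite inE => /orP [/eqP <-|hx] ha hb.
  rewrite ha (negbTE hb) /= add0n add1n ltnS; exact: sub_count.
have := IH hx ha hb; case: (boolP (b y)) => hby; first by rewrite (hab _ hby) /=; lia.
by case: (a y) => /=; lia.
Qed.

Local Notation E := (minkowski_entries A B).
Local Notation P := (pareto_sum A B).

Lemma memP p : (p \in P) = (p \in E) && ~~ has (fun m' => dominates m' p) E.
Proof. by rewrite /pareto_sum mem_undup mem_filter andbC. Qed.

Lemma memP_E p : p \in P -> p \in E.
Proof. by rewrite memP => /andP []. Qed.

Lemma memP_nd p q : p \in P -> q \in E -> ~~ dominates q p.
Proof. by rewrite memP => /andP [_ /hasPn h] /h. Qed.

Variables (X Y : R) (Mnn : point R).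
Hypotheses (hMP : Mnn \in P) (hX : Mnn.1 = X) (hY : Mnn.2 = Y)
  (hYmin : forall q, q \in E -> Y <= q.2).

Local Notation N xm := (count (fun p : point R => xm < p.1) P).
Local Notation K := (n * (4 * L + 2))%N.

Lemma loop_spec f C xm ym t s :
  Mnn \in C -> all (mem P) C -> (xm, ym) \in P ->
  (forall p, p \in P -> p.1 <= xm -> p \in C) ->
  (forall q, q \in E -> q.1 < xm -> ym <= q.2) ->
  (N xm < f)%N ->
  (forall p, (p \in (sbs_loop A B n f C xm X Y ym t s).1.1) = (p \in P)) /\
  (size (sbs_loop A B n f C xm X Y ym t s).1.1 <= size C + N xm)%N /\
  ((sbs_loop A B n f C xm X Y ym t s).1.2 <= t + (N xm).+1 * K.+1)%N /\
  ((sbs_loop A B n f C xm X Y ym t s).2 <= maxn s (2 * n + size C + N xm + aux_words))%N.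
Proof.
elim: f C xm ym t s => [//|f IH] C xm ym t s hMC hCP hq0 hI2 hI3 hf /=.
have hq0E := memP_E hq0.
have [og oc] := oracle_good xm X Y ym.
case Eo: oracle og oc => [[m|] c] /= og oc; last first.
  split.
    move=> p; apply/idP/idP => [hp|hp]; first exact: (allP hCP).
    case: (leP p.1 xm) => hpx; first exact: hI2.
    have hpy : p.2 < ym.
      have := memP_nd hp hq0E; rewrite ltNge; apply: contra => h.
      apply: dom_intro => //=; last exact: ltW.
      by apply/negP => /eqP ep; move: hpx; rewrite -ep /= ltxx.
    case: (ltP p.1 X) => hpX.
      have := og p (memP_E hp).
      by rewrite /inrange (ltW hpx) hpX hYmin ?hpy //; apply: memP_E.
    have -> : p = Mnn; last exact: hMC.
    apply/eqP; apply: contraT => hne.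
    have := memP_nd hp (memP_E hMP); rewrite /dominates eq_sym hne hX hY hpX.
    by rewrite hYmin //; apply: memP_E.
  split; first exact: leq_addr.
  split; first by nia.
  exact: leq_maxl.
case: og => mE [mr mlex].
move: (mr); rewrite /inrange => /and4P [mx1 mx2 my1 my2].
have mP : m \in P.
  rewrite memP mE /=; apply/hasPn => q qE; apply/negP => /and3P [nqm h1 h2].
  case: (ltP q.1 xm) => hqx.
    by have := hI3 q qE hqx; rewrite leNgt (le_lt_trans h2 my2).
  have hqr : inrange xm X Y ym q.
    by rewrite /inrange hqx (le_lt_trans h1 mx2) hYmin // (le_lt_trans h2 my2).
  have := mlex q qE hqr; rewrite /lexlt negb_or negb_and -!leNgt => /andP [h1' h3].
  have e1 : q.1 = m.1 by apply/eqP; rewrite eq_le h1 h1'.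
  move: h3; rewrite e1 eqxx /= => h3.
  have e2 : q.2 = m.2 by apply/eqP; rewrite eq_le h2 h3.
  by move: nqm; rewrite (pt_eq e1 e2) eqxx.
have hxm : xm < m.1.
  rewrite lt_neqAle mx1 andbT; apply/negP => /eqP exm.
  have := memP_nd hq0 mE; rewrite /dominates /= -exm lexx (ltW my2) !andbT negbK.
  by move/eqP => em; move: my2; rewrite em /= ltxx.
have hfuel : (N m.1 < N xm)%N.
  apply: (count_lt (x0 := m)) => //= [x hx|]; first exact: lt_trans hx.
  by rewrite ltxx.
have := IH (rcons C m) m.1 m.2 (t + c + 1)%N (maxn s (mem_used n (rcons C m))).
case.
- by rewrite mem_rcons inE hMC orbT.
- by rewrite all_rcons; apply/andP; split.
- by rewrite -surjective_pairing.
- move=> p hp hpm; case: (leP p.1 xm) => hpx.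
    by rewrite mem_rcons inE hI2 ?orbT.
  have hpy : p.2 < ym.
    have := memP_nd hp hq0E; rewrite ltNge; apply: contra => h.
    apply: dom_intro => //=; last exact: ltW.
    by apply/negP => /eqP ep; move: hpx; rewrite -ep /= ltxx.
  have hpr : inrange xm X Y ym p.
    by rewrite /inrange (ltW hpx) (le_lt_trans hpm mx2) hYmin ?hpy //; apply: memP_E.
  have hnl := mlex p (memP_E hp) hpr.
  case: (eqVneq p m) => [->|hne]; first by rewrite mem_rcons inE eqxx.
  have := lexlt_total hne; rewrite (negbTE hnl) /= => hl.
  exfalso; move: hl; rewrite /lexlt => /orP [h|/andP [/eqP e1 h]].
    by move: hpm; rewrite leNgt h.
  have := memP_nd hp mE; rewrite /dominates eq_sym hne e1 lexx (ltW h).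
  by [].
- move=> q qE hq; case: (ltP q.1 xm) => hqx.
    exact: le_trans (ltW my2) (hI3 q qE hqx).
  case: (ltP q.2 ym) => hqy; last exact: le_trans (ltW my2) hqy.
  have hqr : inrange xm X Y ym q.
    by rewrite /inrange hqx (lt_trans hq mx2) hYmin.
  by have := mlex q qE hqr; rewrite /lexlt hq.
- have hf' : (N xm <= f)%N by rewrite -ltnS.
  exact: leq_trans hfuel hf'.
move=> h1 [h2 [h3 h4]].
split; first exact: h1.
split; first by rewrite size_rcons in h2; exact: ar2 hfuel h2.
split; first exact: ar3 hfuel oc h3.
rewrite /mem_used size_rcons in h4 *; exact: ar4 hfuel h4.
Qed.

End S.
 Lemma ar5 T N k n L : (N <= k -> 0 < k -> 0 < n -> 0 < L ->
   T <= 1 + N.+1 * (n * (4 * L + 2)).+1 -> T <= 20 * (n * k * L))%N.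
 Proof. nia. Qed.
 Lemma ar6 S N k n : (N <= k -> 0 < n ->
   S <= maxn (2 * n + 2 + 16) (2 * n + 2 + N + 16) -> S <= 20 * (n + k))%N.
 Proof. lia. Qed.

Theorem mainTheorem7 :
  exists c : nat,
  forall (R : realDomainType) (n : nat) (A B : seq (point R)),
    (0 < n)%N -> size A = n -> size B = n ->
    pareto_set A -> pareto_set B ->
    sorted (@lexlt R) A -> sorted (@lexlt R) B ->
    let k := size (pareto_sum A B) in
    (forall p, (p \in sbs_output A B) = (p \in pareto_sum A B)) /\
    (sbs_time A B <= c * (n * k * (trunc_log 2 n).+1))%N /\
    (sbs_space A B <= c * (n + k))%N.
Proof.
exists 20%N => R n A B n0 sA sB pA pB oA oB k.
have hL : (n < 2 ^ (trunc_log 2 n).+1)%N by apply: trunc_log_ltn.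
rewrite /sbs_output /sbs_time /sbs_space /sbs sA.
set M11 := mentry A B 0 0.
set Mnn := mentry A B n.-1 n.-1.
have hn1 : (n.-1 < n)%N by lia.
have hMnnE : Mnn \in minkowski_entries A B by apply/(entriesP sA sB); exists n.-1, n.-1.
have hM11E : M11 \in minkowski_entries A B by apply/(entriesP sA sB); exists 0%N, 0%N.
have hMnnP : Mnn \in pareto_sum A B.
  rewrite memP hMnnE /=; apply/hasPn => q /(entriesP sA sB) [i [j [hi hj ->]]].
  apply/negP => /and3P [hne _ hy].
  have [ei ej] := min_y sA sB pA pB oA oB hi hj hy.
  by move: hne; rewrite ei ej eqxx.
have hM11P : M11 \in pareto_sum A B.
  rewrite memP hM11E /=; apply/hasPn => q /(entriesP sA sB) [i [j [hi hj ->]]].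
  apply/negP => /and3P [hne hx _].
  have [ei ej] := min_x sA sB pA pB oA oB hi hj hx.
  by move: hne; rewrite ei ej eqxx.
have hYmin : forall q, q \in minkowski_entries A B -> Mnn.2 <= q.2.
  move=> q /(entriesP sA sB) [i [j [hi hj ->]]]; exact: y_ge.
have hcnt : (count (fun p : point R => (M11.1 < p.1)%R) (pareto_sum A B) <= k)%N
  by exact: count_size.
have hk : (k <= n * n)%N.
  rewrite /k /pareto_sum; apply: (leq_trans (size_undup _)).
  rewrite size_filter; apply: (leq_trans (count_size _ _)).
  by rewrite /minkowski_entries size_allpairs sA sB.
have kpos : (0 < k)%N by rewrite /k; case: (pareto_sum A B) hM11P.
have := @loop_spec R A B n sA sB pA oA oB _ hL Mnn.1 Mnn.2 Mnn hMnnP erefl erefl hYmin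
  (n * n).+1 [:: M11; Mnn] M11.1 M11.2 1%N (mem_used n [:: M11; Mnn]).
case.
- by rewrite !inE eqxx orbT.
- by rewrite /= hM11P hMnnP.
- by rewrite -surjective_pairing.
- move=> p /memP_E /(entriesP sA sB) [i [j [hi hj ->]]] hx.
  have [ei ej] := min_x sA sB pA pB oA oB hi hj hx.
  by rewrite ei ej inE eqxx.
- move=> q /(entriesP sA sB) [i [j [hi hj ->]]] hx.
  have [ei ej] := min_x sA sB pA pB oA oB hi hj (ltW hx).
  by move: hx; rewrite ei ej ltxx.
- by rewrite ltnS; exact: leq_trans hcnt hk.
move=> h1 [h2 [h3 h4]].
split; first exact: h1.
split; first exact: ar5 hcnt kpos n0 (ltn0Sn _) h3.
by apply: ar6 hcnt n0 _; move: h4; rewrite /mem_used /aux_words /=.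
Qed.
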